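(* Let $S^t$ ($t\ge 0$) be a continuous semidynamical system on a complete metric space $(X,d)$. Assume that for some $h>0$ and every bounded set $A\subset X$ the set $A(h)$ is either empty or precompact. Suppose there exist two disjoint compact invariant sets $K_1,K_2\subset X$ such that $d(S^tx,K_2)\to 0$ as $t\to+\infty$ for every $x\in X\setminus K_1$. If the set $F_\varepsilon=\{x\in X: d(x,K_1)=\varepsilon\}$ is nonempty for every sufficiently small $\varepsilon>0$, then there exists at least one complete orbit $\psi$ of $S^t$ with $\alpha(\psi)\subset K_1$ and $\omega(\psi)\subset K_2$.
   Context: For $A\subset X$ and $h>0$, $A(h)=\{x\in A:\ x=S^hz \text{ and } S^uz\in A \text{ for all } u\in[0,h], \text{ for some } z\in A\}$. A complete orbit is a continuous map $\psi:\mathbb{R}\to X$ with $S^a\psi(t)=\psi(t+a)$ for all $a\ge0$, $t\in\mathbb{R}$. Its $\alpha$-limit set is $\alpha(\psi)=\bigcap_{q\le 0}\overline{\{\psi(s):s\le q\}}$ and its $\omega$-limit set is $\omega(\psi)=\bigcap_{q\ge0}\overline{\{\psi(s):s\ge q\}}$. *)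

(* Defs.v *)
From Stdlib Require Import Reals.
Open Scope R_scope.

Section MetricDefs.
Context {X : Type} (d : X -> X -> R).

Definition is_metric : Prop :=
  (forall x y, 0 <= d x y) /\
  (forall x y, d x y = 0 <-> x = y) /\
  (forall x y, d x y = d y x) /\
  (forall x y z, d x z <= d x y + d y z).

Definition seq_cvg (u : nat -> X) (x : X) : Prop :=
  forall e, 0 < e -> exists N, forall n, (N <= n)%nat -> d (u n) x < e.

Definition cauchy_seq (u : nat -> X) : Prop :=
  forall e, 0 < e -> exists N, forall m n, (N <= m)%nat -> (N <= n)%nat ->
    d (u m) (u n) < e.

Definition complete_space : Prop :=
  forall u : nat -> X, cauchy_seq u -> exists x, seq_cvg u x.

Definition subseq (phi : nat -> nat) : Prop :=
  forall n, (phi n < phi (S n))%nat.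

(* (sequential) compactness, equivalent to compactness in metric spaces *)
Definition seq_compact (K : X -> Prop) : Prop :=
  forall u : nat -> X, (forall n, K (u n)) ->
    exists phi x, subseq phi /\ K x /\ seq_cvg (fun n => u (phi n)) x.

Definition mclosure (E : X -> Prop) (x : X) : Prop :=
  forall e, 0 < e -> exists y, E y /\ d x y < e.

Definition precompact (A : X -> Prop) : Prop := seq_compact (mclosure A).

Definition bounded_set (A : X -> Prop) : Prop :=
  exists x0 r, forall x, A x -> d x0 x <= r.

Definition is_inf (E : R -> Prop) (r : R) : Prop :=
  (forall y, E y -> r <= y) /\
  (forall r', (forall y, E y -> r' <= y) -> r' <= r).

Definition dist_set_eq (x : X) (A : X -> Prop) (r : R) : Prop :=
  is_inf (fun y => exists a, A a /\ y = d x a) r.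

Definition dist_to_set_tends_to_0 (f : R -> X) (A : X -> Prop) : Prop :=
  forall e, 0 < e -> exists T, forall t, T <= t ->
    exists a, A a /\ d (f t) a < e.

End MetricDefs.

Section Semiflow.
Context {X : Type} (d : X -> X -> R) (S : R -> X -> X).

(* continuous semidynamical system S^t, t >= 0 (values of S at t < 0 are
   irrelevant); continuity is joint continuity of (t,x) |-> S^t x on
   [0,+oo) x X *)
Definition continuous_semiflow : Prop :=
  (forall x, S 0 x = x) /\
  (forall t s x, 0 <= t -> 0 <= s -> S (t + s) x = S t (S s x)) /\
  (forall t x e, 0 <= t -> 0 < e -> exists delta, 0 < delta /\
     forall t' y, 0 <= t' -> Rabs (t' - t) < delta -> d x y < delta ->
       d (S t x) (S t' y) < e).

Definition A_h (A : X -> Prop) (h : R) (x : X) : Prop :=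
  A x /\ exists z, A z /\ x = S h z /\ (forall u, 0 <= u <= h -> A (S u z)).

Definition invariant (K : X -> Prop) : Prop :=
  forall t, 0 <= t -> forall y, K y <-> exists x, K x /\ y = S t x.

Definition complete_orbit (psi : R -> X) : Prop :=
  (forall t e, 0 < e -> exists delta, 0 < delta /\
     forall s, Rabs (s - t) < delta -> d (psi t) (psi s) < e) /\
  (forall a t, 0 <= a -> S a (psi t) = psi (t + a)).

Definition alpha_limit (psi : R -> X) (x : X) : Prop :=
  forall q, q <= 0 -> mclosure d (fun y => exists s, s <= q /\ y = psi s) x.

Definition omega_limit (psi : R -> X) (x : X) : Prop :=
  forall q, 0 <= q -> mclosure d (fun y => exists s, q <= s /\ y = psi s) x.

End Semiflow.

(* Main.v *)
Require Import Defs.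
From Stdlib Require Import Reals Lra Lia Classical IndefiniteDescription.
Open Scope R_scope.

Lemma inv_small (e : R) : 0 < e -> exists N : nat, forall k, (N <= k)%nat -> / (INR k + 1) < e.
Proof.
  intros He. destruct (INR_archimed 1 (/ e)) as [N HN]; [lra|].
  exists N. intros k Hk. apply le_INR in Hk.
  assert (0 < /e) by (apply Rinv_0_lt_compat; lra).
  assert (HN' : / e < INR k + 1) by lra.
  rewrite <- (Rinv_inv e). apply Rinv_lt_contravar; [|lra].
  apply Rmult_lt_0_compat; lra.
Qed.

Lemma extract (P : nat -> nat -> Prop) :
  (forall k N, exists n, (N <= n)%nat /\ P k n) ->
  exists phi, subseq phi /\ forall k, P k (phi k).
Proof.
  intros H.
  assert (H' : forall p : nat * nat, exists n, (fst p <= n)%nat /\ P (snd p) n)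
    by (intros [k N]; apply H).
  destruct (functional_choice _ H') as [f Hf].
  exists (fix phi k := match k with O => f (O, O) | S k' => f (S (phi k'), S k') end).
  split.
  - intros n. simpl. destruct (Hf (S ((fix phi (k : nat) : nat :=
        match k with O => f (O, O) | S k' => f (S (phi k'), S k') end) n), S n)) as [H1 _].
    simpl in H1. lia.
  - intros [|k]; [apply (Hf (O,O))|]. simpl.
    exact (proj2 (Hf (S _, S k))).
Qed.

Lemma subseq_mono phi : subseq phi -> forall n m, (n <= m)%nat -> (phi n <= phi m)%nat.
Proof.
  intros H n m Hnm. induction Hnm; [lia|]. specialize (H m). lia.
Qed.

Lemma subseq_ge phi : subseq phi -> forall n, (n <= phi n)%nat.
Proof.
  intros H n. induction n; [lia|]. specialize (H n). lia.
Qed.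

Lemma subseq_comp phi psi : subseq phi -> subseq psi -> subseq (fun k => phi (psi k)).
Proof.
  intros H1 H2 n. specialize (H2 n).
  assert (phi (S (psi n)) <= phi (psi (S n)))%nat by (apply subseq_mono; auto).
  specialize (H1 (psi n)). lia.
Qed.

Section Metric.
Context {X : Type} (d : X -> X -> R) (Hm : is_metric d).

Lemma d_pos x y : 0 <= d x y. Proof. apply (proj1 Hm). Qed.
Lemma d_refl x : d x x = 0. Proof. apply (proj1 (proj2 Hm)). reflexivity. Qed.
Lemma d_eq x y : d x y = 0 -> x = y. Proof. apply (proj1 (proj2 Hm)). Qed.
Lemma d_sym x y : d x y = d y x. Proof. apply (proj1 (proj2 (proj2 Hm))). Qed.
Lemma d_tri x y z : d x z <= d x y + d y z. Proof. apply (proj2 (proj2 (proj2 Hm))). Qed.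

Lemma cvg_sub u x phi : subseq phi -> seq_cvg d u x -> seq_cvg d (fun k => u (phi k)) x.
Proof.
  intros Hp Hc e He. destruct (Hc e He) as [N HN]. exists N. intros n Hn.
  apply HN. pose proof (subseq_ge _ Hp n). lia.
Qed.

Lemma cvg_unique u x y : seq_cvg d u x -> seq_cvg d u y -> x = y.
Proof.
  intros H1 H2. apply d_eq. apply Rle_antisym; [|apply d_pos].
  apply Rle_plus_epsilon. intros e He.
  destruct (H1 (e/2)) as [N1 HN1]; [lra|]. destruct (H2 (e/2)) as [N2 HN2]; [lra|].
  specialize (HN1 (N1 + N2)%nat ltac:(lia)). specialize (HN2 (N1 + N2)%nat ltac:(lia)).
  pose proof (d_tri x (u (N1+N2)%nat) y). rewrite d_sym in HN1. lra.
Qed.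

Lemma compact_closed K x : seq_compact d K ->
  (forall e, 0 < e -> exists a, K a /\ d x a < e) -> K x.
Proof.
  intros HK Hx.
  assert (H : forall n : nat, exists a, K a /\ d x a < / (INR n + 1)).
  { intros n. apply Hx. apply Rinv_0_lt_compat. pose proof (pos_INR n). lra. }
  destruct (functional_choice _ H) as [a Ha].
  destruct (HK a (fun n => proj1 (Ha n))) as [phi [y [Hphi [Ky Hc]]]].
  assert (seq_cvg d (fun k => a (phi k)) x).
  { intros e He. destruct (inv_small e He) as [N HN]. exists N. intros n Hn.
    rewrite d_sym. apply Rlt_trans with (/ (INR (phi n) + 1)); [apply Ha|].
    apply HN. pose proof (subseq_ge _ Hphi n). lia. }
  replace x with y; auto. eapply cvg_unique; eauto.
Qed.

Lemma compact_bounded K x0 : seq_compact d K -> exists r, forall a, K a -> d x0 a <= r.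
Proof.
  intros HK. apply NNPP. intros Hn.
  assert (H : forall n : nat, exists a, K a /\ INR n < d x0 a).
  { intros n. apply NNPP. intros H1. apply Hn. exists (INR n). intros a Ka.
    apply Rnot_lt_le. intros H2. apply H1. eauto. }
  destruct (functional_choice _ H) as [a Ha].
  destruct (HK a (fun n => proj1 (Ha n))) as [phi [y [Hphi [Ky Hc]]]].
  destruct (Hc 1) as [N HN]; [lra|].
  destruct (INR_archimed 1 (d x0 y + 1)) as [M HM]; [lra|].
  set (k := (N + M)%nat).
  specialize (HN k ltac:(unfold k; lia)).
  pose proof (proj2 (Ha (phi k))). pose proof (subseq_ge _ Hphi k).
  assert (INR M <= INR (phi k)) by (apply le_INR; unfold k in *; lia).
  pose proof (d_tri x0 y (a (phi k))). rewrite (d_sym y) in *. lra.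
Qed.

End Metric.

Lemma BW_R (u : nat -> R) (a b : R) : (forall n, a <= u n <= b) ->
  exists phi l, subseq phi /\ a <= l <= b /\
    forall e, 0 < e -> exists N, forall k, (N <= k)%nat -> Rabs (u (phi k) - l) < e.
Proof.
  intros Hu. destruct (Bolzano_Weierstrass u _ (compact_P3 a b) Hu) as [l Hl].
  assert (Hf : forall k N, exists n, (N <= n)%nat /\ Rabs (u n - l) < / (INR k + 1)).
  { intros k N. assert (Hp : 0 < / (INR k + 1))
      by (apply Rinv_0_lt_compat; pose proof (pos_INR k); lra).
    destruct (Hl (disc l (mkposreal _ Hp)) N) as [p [Hp1 Hp2]].
    - exists (mkposreal _ Hp). intros y Hy. exact Hy.
    - exists p. split; auto. }
  destruct (extract _ Hf) as [phi [Hphi Hc]].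
  assert (Hcv : forall e, 0 < e -> exists N, forall k, (N <= k)%nat -> Rabs (u (phi k) - l) < e).
  { intros e He. destruct (inv_small e He) as [N HN]. exists N. intros k Hk.
    eapply Rlt_trans; [apply Hc| apply HN; auto]. }
  exists phi, l. repeat split; auto.
  - apply Rnot_lt_le. intros H. destruct (Hcv (a - l)) as [N HN]; [lra|].
    specialize (HN N (le_n _)). specialize (Hu (phi N)).
    apply Rabs_def2 in HN. lra.
  - apply Rnot_lt_le. intros H. destruct (Hcv (l - b)) as [N HN]; [lra|].
    specialize (HN N (le_n _)). specialize (Hu (phi N)).
    apply Rabs_def2 in HN. lra.
Qed.

Section Dist.
Context {X : Type} (d : X -> X -> R) (Hm : is_metric d) (K : X -> Prop)
  (HK : seq_compact d K) (k0 : X) (Hk0 : K k0).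

Lemma inf_exists x : exists r, dist_set_eq d x K r.
Proof.
  set (E := fun y => exists a, K a /\ y = - d x a).
  assert (HB : bound E).
  { exists 0. intros y [a [_ ->]]. pose proof (d_pos d Hm x a). lra. }
  destruct (completeness E HB (ex_intro _ (- d x k0) (ex_intro _ k0 (conj Hk0 eq_refl))))
    as [m [Hm1 Hm2]].
  exists (- m). split.
  - intros y [a [Ka ->]]. assert (- d x a <= m) by (apply Hm1; exists a; auto). lra.
  - intros r' Hr'. assert (m <= - r'); [|lra]. apply Hm2.
    intros y [a [Ka ->]]. assert (r' <= d x a) by (apply Hr'; exists a; auto). lra.
Qed.

Lemma D_exists : exists D : X -> R, forall x, dist_set_eq d x K (D x).
Proof. apply (functional_choice _ inf_exists). Qed.

Variable D : X -> R.
Hypothesis HD : forall x, dist_set_eq d x K (D x).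

Lemma D_le x a : K a -> D x <= d x a.
Proof. intros Ka. apply (proj1 (HD x)). eauto. Qed.

Lemma D_ge0 x : 0 <= D x.
Proof. apply (proj2 (HD x)). intros y [a [_ ->]]. apply d_pos; auto. Qed.

Lemma D_approx x e : 0 < e -> exists a, K a /\ d x a < D x + e.
Proof.
  intros He. apply NNPP. intros Hn.
  assert (D x + e <= D x); [|lra].
  apply (proj2 (HD x)). intros y [a [Ka ->]]. apply Rnot_lt_le. intros H. apply Hn. eauto.
Qed.

Lemma D_lip x y : D x <= D y + d x y.
Proof.
  apply Rle_plus_epsilon. intros e He. destruct (D_approx y e He) as [a [Ka Ha]].
  pose proof (D_le x a Ka). pose proof (d_tri d Hm x y a). lra.
Qed.

Lemma D_lip_abs x y : Rabs (D x - D y) <= d x y.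
Proof.
  pose proof (D_lip x y). pose proof (D_lip y x). rewrite (d_sym d Hm y x) in *.
  apply Rabs_le. lra.
Qed.

Lemma D_unique x r : dist_set_eq d x K r -> r = D x.
Proof.
  intros [H1 H2]. destruct (HD x) as [H3 H4]. apply Rle_antisym; auto.
Qed.

Lemma D_K x : K x -> D x = 0.
Proof. intros Kx. pose proof (D_le x x Kx). rewrite d_refl in H; auto. pose proof (D_ge0 x). lra. Qed.

Lemma D_zero x : D x = 0 -> K x.
Proof.
  intros H0. apply (compact_closed d Hm K x HK). intros e He.
  destruct (D_approx x e He) as [a [Ka Ha]]. exists a. split; auto. lra.
Qed.

End Dist.

Section Main.
Context {X : Type} (d : X -> X -> R) (S : R -> X -> X) (h : R) (K1 K2 : X -> Prop).
Hypothesis Hm : is_metric d.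
Hypothesis Hsf : continuous_semiflow d S.
Hypothesis Hh : 0 < h.
Hypothesis HAh : forall A : X -> Prop, bounded_set d A ->
     (forall x, ~ A_h S A h x) \/ precompact d (A_h S A h).
Hypothesis HK1 : seq_compact d K1.
Hypothesis HK2 : seq_compact d K2.
Hypothesis Hinv1 : invariant S K1.
Hypothesis Hinv2 : invariant S K2.
Hypothesis Hdisj : forall x, ~ (K1 x /\ K2 x).
Hypothesis Hattr : forall x, ~ K1 x -> dist_to_set_tends_to_0 d (fun t => S t x) K2.
Variable D : X -> R.
Hypothesis HD : forall x, dist_set_eq d x K1 (D x).
Variable k0 : X.
Hypothesis Hk0 : K1 k0.

Lemma S0 x : S 0 x = x. Proof. apply (proj1 Hsf). Qed.
Lemma Sadd t s x : 0 <= t -> 0 <= s -> S (t + s) x = S t (S s x).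
Proof. apply (proj1 (proj2 Hsf)). Qed.
Lemma Scont t x e : 0 <= t -> 0 < e -> exists delta, 0 < delta /\
     forall t' y, 0 <= t' -> Rabs (t' - t) < delta -> d x y < delta ->
       d (S t x) (S t' y) < e.
Proof. apply (proj2 (proj2 Hsf)). Qed.

Lemma Scont_time t x e : 0 <= t -> 0 < e -> exists delta, 0 < delta /\
     forall t', 0 <= t' -> Rabs (t' - t) < delta -> Rabs (D (S t' x) - D (S t x)) < e.
Proof.
  intros Ht He. destruct (Scont t x e Ht He) as [dl [Hdl H]]. exists dl. split; auto.
  intros t' Ht' Hd. eapply Rle_lt_trans. apply (D_lip_abs d Hm K1 D HD).
  rewrite (d_sym d Hm). apply H; auto. rewrite d_refl; auto.
Qed.

Lemma K1_inv a t : K1 a -> 0 <= t -> K1 (S t a).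
Proof. intros Ka Ht. apply (Hinv1 t Ht). eauto. Qed.

Lemma separation : exists dl, 0 < dl /\ forall b, K2 b -> dl <= D b.
Proof.
  apply NNPP. intros Hn.
  assert (H : forall n : nat, exists b, K2 b /\ D b < / (INR n + 1)).
  { intros n. apply NNPP. intros H1. apply Hn. exists (/ (INR n + 1)). split.
    - apply Rinv_0_lt_compat. pose proof (pos_INR n). lra.
    - intros b Kb. apply Rnot_lt_le. intros H2. apply H1. eauto. }
  destruct (functional_choice _ H) as [bs Hb].
  destruct (HK2 bs (fun n => proj1 (Hb n))) as [phi [b [Hphi [Kb Hc]]]].
  apply (Hdisj b). split; auto.
  apply (D_zero d Hm K1 HK1 D HD). apply Rle_antisym; [|apply (D_ge0 d Hm K1 D HD)].
  apply Rle_plus_epsilon. intros e He.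
  destruct (Hc (e/2)) as [N1 HN1]; [lra|].
  destruct (inv_small (e/2)) as [N2 HN2]; [lra|].
  set (k := (N1 + N2)%nat).
  specialize (HN1 k ltac:(unfold k; lia)).
  assert (D (bs (phi k)) < e/2).
  { eapply Rlt_trans. apply Hb. apply HN2. pose proof (subseq_ge _ Hphi k). unfold k in *; lia. }
  pose proof (D_lip d Hm K1 D HD b (bs (phi k))). rewrite (d_sym d Hm) in H1. lra.
Qed.

Variable dl : R.
Hypothesis Hdl : 0 < dl.
Hypothesis Hsep : forall b, K2 b -> dl <= D b.
Variable eps : R.
Hypothesis Heps : 0 < eps.
Hypothesis Hepsdl : eps < dl.

Lemma escape x : ~ K1 x -> exists T, 0 <= T /\ forall t, T <= t -> eps < D (S t x).
Proof.
  intros Hx. destruct (Hattr x Hx (dl - eps)) as [T0 HT0]; [lra|].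
  exists (Rmax T0 0). split; [apply Rmax_r|]. intros t Ht.
  destruct (HT0 t) as [a [Ka Ha]]. { pose proof (Rmax_l T0 0). lra. }
  pose proof (Hsep a Ka). pose proof (D_lip d Hm K1 D HD a (S t x)).
  rewrite (d_sym d Hm) in H0. lra.
Qed.

Lemma exit x : D x < eps -> ~ K1 x -> exists tau, 0 <= tau /\ D (S tau x) = eps /\
  forall s, 0 <= s <= tau -> D (S s x) <= eps.
Proof.
  intros Hx HK. destruct (escape x HK) as [T [HT0 HT]].
  set (A := fun t => 0 <= t /\ forall s, 0 <= s <= t -> D (S s x) < eps).
  assert (HB : bound A).
  { exists T. intros t [Ht Hs]. apply Rnot_lt_le. intros H.
    specialize (Hs T ltac:(lra)). specialize (HT T (Rle_refl _)). lra. }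
  assert (A0 : A 0).
  { split; [lra|]. intros s Hs. replace s with 0 by lra. rewrite S0. auto. }
  destruct (completeness A HB (ex_intro _ 0 A0)) as [tau [Hub Hlub]].
  assert (Htau0 : 0 <= tau) by (apply Hub; auto).
  assert (Hlt : forall s, 0 <= s < tau -> D (S s x) < eps).
  { intros s Hs. apply NNPP. intros Hn.
    assert (tau <= s); [|lra]. apply Hlub. intros t [Ht Ht2]. apply Rnot_lt_le. intros H.
    apply Hn. apply Ht2. lra. }
  assert (Hle : D (S tau x) <= eps).
  { apply Rnot_lt_le. intros H.
    destruct (Scont_time tau x (D (S tau x) - eps)) as [eta [Heta He]]; auto; [lra|].
    destruct (Req_dec tau 0) as [E|E].
    - rewrite E, S0 in H. lra.
    - set (s := Rmax 0 (tau - eta/2)).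
      assert (0 <= s) by apply Rmax_l.
      assert (s < tau) by (unfold s; apply Rmax_lub_lt; lra).
      assert (tau - eta/2 <= s) by apply Rmax_r.
      specialize (He s ltac:(auto) ltac:(apply Rabs_def1; lra)).
      specialize (Hlt s ltac:(lra)). apply Rabs_def2 in He. lra. }
  assert (Hge : eps <= D (S tau x)).
  { apply Rnot_lt_le. intros H.
    destruct (Scont_time tau x (eps - D (S tau x))) as [eta [Heta He]]; auto; [lra|].
    assert (A (tau + eta/2)).
    { split; [lra|]. intros s Hs. destruct (Rlt_or_le s tau) as [H1|H1].
      - apply Hlt; lra.
      - specialize (He s ltac:(lra) ltac:(apply Rabs_def1; lra)). apply Rabs_def2 in He. lra. }
    specialize (Hub _ H0). lra. }
  exists tau. split; auto. split; [lra|]. intros s Hs.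
  destruct (Rlt_or_le s tau) as [H1|H1].
  - left. apply Hlt; lra.
  - replace s with tau by lra. auto.
Qed.


Variable xs : nat -> X.
Hypothesis Hxs1 : forall n, 0 < D (xs n) < eps.
Hypothesis Hxs2 : forall e, 0 < e -> exists N, forall n, (N <= n)%nat -> D (xs n) < e.
Variable ts : nat -> R.
Hypothesis Hts : forall n, 0 <= ts n /\ D (S (ts n) (xs n)) = eps /\
  forall s, 0 <= s <= ts n -> D (S s (xs n)) <= eps.

Lemma ts_large M : exists N, forall n, (N <= n)%nat -> M <= ts n.
Proof.
  apply NNPP. intros Hn.
  assert (Hf : forall k N : nat, exists n, (N <= n)%nat /\ ts n < M).
  { intros _ N. apply NNPP. intros H1. apply Hn. exists N. intros n Hn'.
    apply Rnot_lt_le. intros H2. apply H1. eauto. }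
  destruct (extract _ Hf) as [phi [Hphi Hphi2]].
  assert (Ha : forall n, exists a, K1 a /\ d (xs n) a < D (xs n) + / (INR n + 1)).
  { intros n. apply (D_approx d K1 D HD). apply Rinv_0_lt_compat.
    pose proof (pos_INR n). lra. }
  destruct (functional_choice _ Ha) as [as_ Has].
  destruct (HK1 (fun k => as_ (phi k)) (fun k => proj1 (Has (phi k))))
    as [psi [a [Hpsi [Ka Hca]]]].
  destruct (BW_R (fun j => ts (phi (psi j))) 0 M) as [rho [tst [Hrho [Htst Hct]]]].
  { intros j. split; [apply Hts|]. left. apply Hphi2. }
  set (nn := fun i => phi (psi (rho i))).
  assert (Hnn : forall i, (i <= nn i)%nat).
  { intros i. unfold nn. pose proof (subseq_ge _ Hrho i).
    pose proof (subseq_ge _ Hpsi (rho i)). pose proof (subseq_ge _ Hphi (psi (rho i))). lia. }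
  destruct (Scont tst a eps) as [eta [Heta Hc]]; [lra|auto|].
  pose proof (cvg_sub d _ _ _ Hrho Hca) as Hca'. simpl in Hca'.
  destruct (Hca' (eta/3)) as [N1 HN1]; [lra|].
  destruct (Hct eta Heta) as [N2 HN2].
  destruct (Hxs2 (eta/3)) as [N3 HN3]; [lra|].
  destruct (inv_small (eta/3)) as [N4 HN4]; [lra|].
  set (i := (N1 + N2 + N3 + N4)%nat).
  specialize (HN1 i ltac:(unfold i; lia)). specialize (HN2 i ltac:(unfold i; lia)).
  specialize (HN3 (nn i) ltac:(pose proof (Hnn i); unfold i in *; lia)).
  specialize (HN4 (nn i) ltac:(pose proof (Hnn i); unfold i in *; lia)).
  pose proof (proj2 (Has (nn i))) as Hd.
  assert (Hax : d a (xs (nn i)) < eta).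
  { pose proof (d_tri d Hm a (as_ (nn i)) (xs (nn i))).
    rewrite (d_sym d Hm (as_ (nn i))) in H. rewrite (d_sym d Hm _ a) in HN1.
    fold nn in HN1. unfold nn in *. lra. }
  specialize (Hc (ts (nn i)) (xs (nn i)) ltac:(apply Hts) HN2 Hax).
  pose proof (D_lip d Hm K1 D HD (S (ts (nn i)) (xs (nn i))) (S tst a)).
  rewrite (D_K d Hm K1 D HD (S tst a)) in H by (apply K1_inv; auto; lra).
  rewrite (d_sym d Hm) in H. destruct (Hts (nn i)) as [_ [E _]]. lra.
Qed.


Definition y n s := S (ts n - s) (xs n).
Definition B := fun x => D x <= eps.

Lemma B_bounded : bounded_set d B.
Proof.
  destruct (compact_bounded d Hm K1 k0 HK1) as [r Hr].
  exists k0, (r + eps + 1). intros x Hx. unfold B in Hx.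
  destruct (D_approx d K1 D HD x 1) as [a [Ka Ha]]; [lra|].
  pose proof (Hr a Ka). pose proof (d_tri d Hm k0 a x). rewrite (d_sym d Hm a x) in H0. lra.
Qed.

Lemma y_Ah n s : 0 <= s -> s + h <= ts n -> A_h S B h (y n s).
Proof.
  intros Hs Hsh. destruct (Hts n) as [Ht0 [_ Hle]]. unfold y, B, A_h. split.
  - apply Hle. lra.
  - exists (S (ts n - s - h) (xs n)). split; [apply Hle; lra|]. split.
    + rewrite <- Sadd by lra. f_equal. ring.
    + intros u Hu. rewrite <- Sadd by lra. apply Hle. lra.
Qed.

Lemma precomp : precompact d (A_h S B h).
Proof.
  destruct (HAh B B_bounded) as [H|H]; auto. exfalso.
  destruct (ts_large h) as [N HN]. apply (H (y N 0)). apply y_Ah; [lra|].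
  specialize (HN N (le_n _)). lra.
Qed.

Lemma extract_ev phi s : subseq phi -> 0 <= s ->
  exists psi z, subseq psi /\ seq_cvg d (fun k => y (phi (psi k)) s) z.
Proof.
  intros Hphi Hs. destruct (ts_large (s + h)) as [N HN].
  destruct (precomp (fun k => y (phi (k + N)%nat) s)) as [psi [z [Hpsi [_ Hc]]]].
  { intros k. intros e He. exists (y (phi (k + N)%nat) s). split.
    - apply y_Ah; auto. apply HN. pose proof (subseq_ge _ Hphi (k + N)%nat). lia.
    - rewrite d_refl; auto. }
  exists (fun k => (psi k + N)%nat), z. split; auto.
  intros n. specialize (Hpsi n). lia.
Qed.

Definition Valid (m : nat) (p : (nat -> nat) * X) :=
  subseq (fst p) /\ seq_cvg d (fun k => y (fst p k) (INR m * h)) (snd p).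

Lemma step m p : Valid m p -> exists p', Valid (Datatypes.S m) p' /\ S h (snd p') = snd p.
Proof.
  destruct p as [phi z]. intros [Hphi Hc]. simpl in *.
  assert (Hs : 0 <= INR (Datatypes.S m) * h) by (pose proof (pos_INR (Datatypes.S m)); nra).
  destruct (extract_ev phi _ Hphi Hs) as [psi [z' [Hpsi Hc']]].
  exists ((fun k => phi (psi k)), z'). split.
  - unfold Valid; simpl; split; [apply subseq_comp; auto|exact Hc'].
  - simpl. apply (cvg_unique d Hm (fun k => y (phi (psi k)) (INR m * h))).
    + intros e He. destruct (Scont h z' e) as [eta [Heta Hct]]; [lra|auto|].
      destruct (Hc' eta Heta) as [N1 HN1].
      destruct (ts_large (INR (Datatypes.S m) * h)) as [N2 HN2].
      exists (N1 + N2)%nat. intros n Hn.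
      specialize (HN1 n ltac:(lia)). rewrite d_sym in HN1; auto.
      specialize (Hct h _ ltac:(lra) ltac:(rewrite Rminus_diag, Rabs_R0; lra) HN1).
      rewrite d_sym; auto.
      replace (y (phi (psi n)) (INR m * h)) with (S h (y (phi (psi n)) (INR (Datatypes.S m) * h))); auto.
      unfold y. rewrite <- Sadd; [| lra |].
      * f_equal. rewrite S_INR. ring.
      * assert (INR (Datatypes.S m) * h <= ts (phi (psi n))); [|lra]. apply HN2.
        pose proof (subseq_ge _ Hpsi n). pose proof (subseq_ge _ Hphi (psi n)). lia.
    + apply (cvg_sub d (fun k => y (phi k) (INR m * h))); auto.
Qed.

Lemma Valid_D m p u : Valid m p -> 0 <= u <= INR m * h -> D (S u (snd p)) <= eps.
Proof.
  destruct p as [phi z]. intros [Hphi Hc] Hu. simpl in *.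
  apply Rnot_lt_le. intros H.
  destruct (Scont u z (D (S u z) - eps)) as [eta [Heta Hct]]; [lra|lra|].
  destruct (Hc eta Heta) as [N1 HN1].
  destruct (ts_large (INR m * h)) as [N2 HN2].
  set (k := (N1 + N2)%nat). specialize (HN1 k ltac:(unfold k; lia)).
  rewrite d_sym in HN1; auto.
  specialize (Hct u _ ltac:(lra) ltac:(rewrite Rminus_diag, Rabs_R0; lra) HN1).
  assert (Hn : INR m * h <= ts (phi k)).
  { apply HN2. pose proof (subseq_ge _ Hphi k). unfold k in *. lia. }
  unfold y in Hct. rewrite <- Sadd in Hct by lra.
  assert (D (S (u + (ts (phi k) - INR m * h)) (xs (phi k))) <= eps).
  { apply (proj2 (proj2 (Hts (phi k)))). lra. }
  pose proof (D_lip d Hm K1 D HD (S u z) (S (u + (ts (phi k) - INR m * h)) (xs (phi k)))).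
  lra.
Qed.

Lemma Valid0_D p : Valid 0 p -> D (snd p) = eps.
Proof.
  destruct p as [phi z]. intros [Hphi Hc]. simpl in *. change (INR 0) with 0 in *.
  assert (Hy : forall n, D (y n (0 * h)) = eps).
  { intros n. unfold y. simpl. replace (ts n - 0 * h) with (ts n) by ring. apply Hts. }
  apply Rle_antisym.
  - apply Rle_plus_epsilon. intros e He. destruct (Hc e He) as [N HN].
    specialize (HN N (le_n _)). pose proof (D_lip d Hm K1 D HD z (y (phi N) (0 * h))).
    rewrite Hy in H. rewrite d_sym in HN; auto. lra.
  - apply Rle_plus_epsilon. intros e He. destruct (Hc e He) as [N HN].
    specialize (HN N (le_n _)). pose proof (D_lip d Hm K1 D HD (y (phi N) (0 * h)) z).
    rewrite Hy in H. lra.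
Qed.


Lemma build : exists z : nat -> X, (forall m, S h (z (Datatypes.S m)) = z m) /\
  (forall m u, 0 <= u <= INR m * h -> D (S u (z m)) <= eps) /\ D (z 0%nat) = eps.
Proof.
  destruct (extract_ev (fun k => k) (INR 0 * h)) as [psi [z0 [Hpsi Hc]]].
  { intros n. lia. } { simpl. lra. }
  assert (V0 : Valid 0 (psi, z0)) by (split; [exact Hpsi| exact Hc]).
  assert (Hex : forall q : nat * ((nat -> nat) * X), exists p',
    Valid (fst q) (snd q) -> Valid (Datatypes.S (fst q)) p' /\ S h (snd p') = snd (snd q)).
  { intros [m p]. simpl. destruct (classic (Valid m p)) as [Hv|Hv].
    - destruct (step m p Hv) as [p' Hp']. exists p'. auto.
    - exists p. intros H; contradiction. }
  destruct (functional_choice _ Hex) as [F HF].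
  set (st := nat_rect (fun _ => ((nat -> nat) * X)%type) (psi, z0) (fun m q => F (m, q))).
  assert (Hst : forall m, Valid m (st m)).
  { induction m as [|m IH]; [exact V0|].
    exact (proj1 (HF (m, st m) IH)). }
  exists (fun m => snd (st m)). split; [|split].
  - intros m. exact (proj2 (HF (m, st m) (Hst m))).
  - intros m u Hu. exact (Valid_D m (st m) u (Hst m) Hu).
  - exact (Valid0_D (st 0%nat) (Hst 0%nat)).
Qed.

Variable z : nat -> X.
Hypothesis Hz1 : forall m, S h (z (Datatypes.S m)) = z m.
Hypothesis Hz2 : forall m u, 0 <= u <= INR m * h -> D (S u (z m)) <= eps.
Hypothesis Hz0 : D (z 0%nat) = eps.

Lemma Zshift j m : z m = S (INR j * h) (z (m + j)%nat).
Proof.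
  induction j as [|j IH].
  - simpl. rewrite Rmult_0_l, S0, Nat.add_0_r. reflexivity.
  - rewrite IH, <- (Hz1 (m + j)%nat), <- Sadd.
    + rewrite Nat.add_succ_r, S_INR. f_equal. ring.
    + pose proof (pos_INR j). nra.
    + lra.
Qed.

Lemma consist t m m' : 0 <= t + INR m * h -> 0 <= t + INR m' * h ->
  S (t + INR m * h) (z m) = S (t + INR m' * h) (z m').
Proof.
  assert (Hc : forall m j, 0 <= t + INR m * h ->
    S (t + INR m * h) (z m) = S (t + INR (m + j) * h) (z (m + j)%nat)).
  { intros m0 j H. rewrite (Zshift j m0) at 1. rewrite <- Sadd by (auto; pose proof (pos_INR j); nra).
    rewrite plus_INR. f_equal. ring. }
  intros H1 H2. destruct (Nat.le_ge_cases m m') as [Hl|Hl].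
  - replace m' with (m + (m' - m))%nat by lia. apply Hc; auto.
  - replace m with (m' + (m - m'))%nat by lia. symmetry. apply Hc; auto.
Qed.

Lemma big_m t : exists m, t < INR m * h.
Proof. destruct (INR_archimed h t Hh) as [m Hmm]. exists m. lra. Qed.

Lemma final : exists psi : R -> X, complete_orbit d S psi /\
    (forall x, alpha_limit d psi x -> K1 x) /\
    (forall x, omega_limit d psi x -> K2 x).
Proof.
  assert (Hex : forall t, exists p, forall m, 0 <= t + INR m * h -> p = S (t + INR m * h) (z m)).
  { intros t. destruct (big_m (- t)) as [m0 Hm0]. exists (S (t + INR m0 * h) (z m0)).
    intros m Hm'. apply consist; lra. }
  destruct (functional_choice _ Hex) as [psi Hpsi].
  assert (Horb : forall a t, 0 <= a -> S a (psi t) = psi (t + a)).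
  { intros a t Ha. destruct (big_m (- t)) as [m Hm0].
    rewrite (Hpsi t m) by lra. rewrite (Hpsi (t + a) m) by lra.
    rewrite <- Sadd by lra. f_equal. ring. }
  assert (Hneg : forall r, r <= 0 -> D (psi r) <= eps).
  { intros r Hr. destruct (big_m (- r)) as [m Hm0]. rewrite (Hpsi r m) by lra.
    apply Hz2. lra. }
  exists psi. split; [split|split].
  - intros t e He. destruct (big_m (1 - t)) as [m Hm0].
    destruct (Scont (t + INR m * h) (z m) e) as [dlt [Hdlt Hct]]; [lra|auto|].
    exists (Rmin dlt 1). split; [apply Rmin_pos; lra|].
    intros s Hs. pose proof (Rmin_l dlt 1). pose proof (Rmin_r dlt 1).
    rewrite (Hpsi t m) by lra. rewrite (Hpsi s m).
    + apply Hct.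
      * apply Rabs_def2 in Hs. lra.
      * replace (s + INR m * h - (t + INR m * h)) with (s - t) by ring. lra.
      * rewrite d_refl; auto.
    + apply Rabs_def2 in Hs. lra.
  - exact Horb.
  - intros x Hx. apply NNPP. intros HKx.
    destruct (escape x HKx) as [T [HT0 HT]].
    specialize (HT T (Rle_refl _)).
    destruct (Scont T x (D (S T x) - eps)) as [eta [Heta Hct]]; [lra|lra|].
    destruct (Hx (- T) ltac:(lra) eta Heta) as [y [[s [Hs ->]] Hd]].
    specialize (Hct T (psi s) HT0 ltac:(rewrite Rminus_diag, Rabs_R0; lra) Hd).
    rewrite Horb in Hct by lra.
    pose proof (Hneg (s + T) ltac:(lra)).
    pose proof (D_lip d Hm K1 D HD (S T x) (psi (s + T))). lra.
  - intros x Hx.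
    assert (Hz0K : ~ K1 (z 0%nat)).
    { intros HK. rewrite (D_K d Hm K1 D HD _ HK) in Hz0. lra. }
    apply (compact_closed d Hm K2 x HK2). intros e He.
    destruct (Hattr _ Hz0K (e/2)) as [T HT]; [lra|].
    destruct (Hx (Rmax T 0) (Rmax_r _ _) (e/2)) as [y [[s [Hs ->]] Hd]]; [lra|].
    pose proof (Rmax_l T 0). pose proof (Rmax_r T 0).
    destruct (HT s) as [a [Ka Ha]]; [lra|].
    exists a. split; auto.
    rewrite (Hpsi s 0%nat) in Hd by (simpl; lra). simpl in Hd.
    replace (s + 0 * h) with s in Hd by ring.
    pose proof (d_tri d Hm x (S s (z 0%nat)) a). lra.
Qed.

End Main.

Theorem lemma4 (X : Type) (d : X -> X -> R) (S : R -> X -> X) (h : R)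
  (K1 K2 : X -> Prop) :
  is_metric d -> complete_space d ->
  continuous_semiflow d S ->
  0 < h ->
  (forall A : X -> Prop, bounded_set d A ->
     (forall x, ~ A_h S A h x) \/ precompact d (A_h S A h)) ->
  seq_compact d K1 -> seq_compact d K2 ->
  invariant S K1 -> invariant S K2 ->
  (forall x, ~ (K1 x /\ K2 x)) ->
  (forall x, ~ K1 x -> dist_to_set_tends_to_0 d (fun t => S t x) K2) ->
  (exists eps0, 0 < eps0 /\ forall eps, 0 < eps < eps0 ->
     exists x, dist_set_eq d x K1 eps) ->
  exists psi : R -> X, complete_orbit d S psi /\
    (forall x, alpha_limit d psi x -> K1 x) /\
    (forall x, omega_limit d psi x -> K2 x).
Proof.
  intros Hm _ Hsf Hh HAh HK1 HK2 Hinv1 Hinv2 Hdisj Hattr [eps0 [Heps0 HF]].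
  assert (Hk0 : exists k0, K1 k0).
  { destruct (HF (eps0/2)) as [x [H1 H2]]; [lra|].
    apply NNPP. intros Hn. assert (eps0/2 + 1 <= eps0/2); [|lra].
    apply H2. intros y [a [Ka _]]. exfalso. eauto. }
  destruct Hk0 as [k0 Hk0].
  destruct (D_exists d Hm K1 k0 Hk0) as [D HD].
  destruct (separation d K1 K2 Hm HK1 HK2 Hdisj D HD) as [dl [Hdl Hsep]].
  set (eps := Rmin eps0 dl / 2).
  assert (Heps : 0 < eps) by (unfold eps; pose proof (Rmin_pos _ _ Heps0 Hdl); lra).
  assert (Hepsdl : eps < dl) by (unfold eps; pose proof (Rmin_r eps0 dl); lra).
  assert (Heps0' : eps < eps0) by (unfold eps; pose proof (Rmin_l eps0 dl); lra).
  assert (Hpos : forall n, 0 < eps / (INR n + 2) < eps).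
  { intros n. pose proof (pos_INR n). split.
    - apply Rdiv_lt_0_compat; lra.
    - apply Rmult_lt_reg_r with (INR n + 2); [lra|].
      unfold Rdiv. rewrite Rmult_assoc, Rinv_l by lra. nra. }
  assert (Hx : forall n : nat, exists x, dist_set_eq d x K1 (eps / (INR n + 2))).
  { intros n. apply HF. specialize (Hpos n). lra. }
  destruct (functional_choice _ Hx) as [xs Hxs].
  assert (HDx : forall n, D (xs n) = eps / (INR n + 2)).
  { intros n. symmetry. apply (D_unique d K1 D HD). apply Hxs. }
  assert (Hxs1 : forall n, 0 < D (xs n) < eps) by (intros n; rewrite HDx; apply Hpos).
  assert (Hxs2 : forall e, 0 < e -> exists N, forall n, (N <= n)%nat -> D (xs n) < e).
  { intros e He. destruct (inv_small (e / eps)) as [N HN].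
    { apply Rdiv_lt_0_compat; lra. }
    exists N. intros n Hn. specialize (HN n Hn). rewrite HDx.
    pose proof (pos_INR n).
    assert (eps / (INR n + 2) <= eps / (INR n + 1)).
    { unfold Rdiv. apply Rmult_le_compat_l; [lra|]. apply Rinv_le_contravar; lra. }
    assert (eps / (INR n + 1) < e); [|lra].
    unfold Rdiv in *. apply Rmult_lt_reg_r with (/ eps).
    { apply Rinv_0_lt_compat; lra. }
    rewrite (Rmult_comm eps), Rmult_assoc, Rinv_r, Rmult_1_r by lra. exact HN. }
  assert (Hts : forall n, exists tau, 0 <= tau /\ D (S tau (xs n)) = eps /\
    forall s, 0 <= s <= tau -> D (S s (xs n)) <= eps).
  { intros n. apply (exit d S K1 K2 Hm Hsf Hattr D HD dl Hsep eps Hepsdl).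
    - apply Hxs1.
    - intros HK. specialize (Hxs1 n). rewrite (D_K d Hm K1 D HD _ HK) in Hxs1. lra. }
  destruct (functional_choice _ Hts) as [ts Hts'].
  destruct (build d S h K1 Hm Hsf Hh HAh HK1 Hinv1 D HD k0 eps Heps xs Hxs2 ts Hts')
    as [z [Hz1 [Hz2 Hz0]]].
  exact (final d S h K1 K2 Hm Hsf Hh HK2 Hattr D HD dl Hsep eps Heps Hepsdl z Hz1 Hz2 Hz0).
Qed.
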